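(* Let $K$ be a skew field, $V$ a left (topological) $K$-vector space with basis $v^0,v^1,\ldots$, $V'$ the dual right $K$-vector space with basis $p_0,p_1,\ldots$, with pairing $(\cdot,\cdot)$, and assume $D=(y_i^k)$, $y_i^k=(v^k,p_i)$, is generic. For $\mathbf f\in V$, $\mathbf g\in V'$ put $f_i=(\mathbf f,p_i)$, $g^k=(v^k,\mathbf g)$ and, for $n\ge0$, $$R_n(\mathbf f,\mathbf g)=(\mathbf f,\mathbf g)-\sum_{i,k=0}^n f_i(z_k^i)_n g^k .$$ Then $$(\mathbf f,\mathbf g)=\sum_{m=0}^n\Delta_R^m f\;|D_m|_m^m\;\Delta_L^m g+R_n(\mathbf f,\mathbf g),$$ and $R_n(\mathbf f,p_i)=R_n(v^k,\mathbf g)=0$ for all $\mathbf f\in V$, $\mathbf g\in V'$ and $0\le i,k\le n$.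
   Context: The pairing $(\cdot,\cdot):V\times V'\to K$ is biadditive with $(\lambda v,p\mu)=\lambda(v,p)\mu$. $D_m$ is the $(m+1)\times(m+1)$ matrix with entry $y_i^k$ in row $k$, column $i$ ($0\le i,k\le m$), and $(z_k^i)_n$ is the entry in row $i$, column $k$ of $D_n^{-1}$. Quasideterminants: for a square matrix $M$ with rows/columns indexed by $\{0,\ldots,n\}$ and entry $M_a^b$ in row $b$, column $a$, $|M|_a^b=M_a^b-r\,(M^{(b,a)})^{-1}c$, where $M^{(b,a)}$ deletes row $b$ and column $a$, $r$ is row $b$ without its column-$a$ entry and $c$ is column $a$ without its row-$b$ entry ($|M|_0^0=M_0^0$ for $1\times1$ matrices). Difference derivatives: let $A=(a_m^i)$ (upper triangular, $a_m^i=0$ for $i>m$) and $C=(c_k^m)$ (lower triangular, $c_k^m=0$ for $k>m$) be the unique matrices such that $q_m=\sum_{i=0}^m p_ia_m^i$ and $w^m=\sum_{k=0}^m c_k^m v^k$ satisfy $(w^m,q_{m'})=0$ for $m\ne m'$ and $(w^m,p_m)=(v^m,q_m)=1$. Then $\Delta_R^m f=(\mathbf f,q_m)=\sum_{i=0}^m f_ia_m^i$ and $\Delta_L^m g=(w^m,\mathbf g)=\sum_{k=0}^m c_k^m g^k$. Genericity means all $D_m$ and all quasideterminants appearing are invertible. *)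

(* Defs.v *)
From HB Require Import structures.
From mathcomp Require Import all_boot all_algebra.
From Stdlib Require Import ClassicalEpsilon.
Set Implicit Arguments. Unset Strict Implicit. Unset Printing Implicit Defensive.
Import GRing.Theory.
Local Open Scope ring_scope.

Definition skew_field (K : unitRingType) : Prop :=
  forall x : K, x != 0 -> x \is a GRing.unit.

Definition mx_inverse (R : pzRingType) (n : nat) (A B : 'M[R]_n) : Prop :=
  A *m B = 1%:M /\ B *m A = 1%:M.

Definition ncunitmx (R : pzRingType) (n : nat) (A : 'M[R]_n) : Prop :=
  exists B, mx_inverse A B.

(* The inverse (when it exists; an arbitrary matrix otherwise). *)
Definition ncinvmx (R : pzRingType) (n : nat) (A : 'M[R]_n) : 'M[R]_n :=
  epsilon (inhabits 0) (mx_inverse A).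

(* Quasideterminant |M|_a^b (M_a^b = M b a is the entry in row b, column a):
   M_a^b - r (M^{(b,a)})^{-1} c. For 1x1 matrices the correction term is an
   empty sum, so |M|_0^0 = M_0^0. *)
Definition qdet (R : pzRingType) (m : nat) (M : 'M[R]_m.+1) (a b : 'I_m.+1) : R :=
  M b a - (row b (col' a M) *m ncinvmx (row' b (col' a M)) *m col a (row' b M)) 0 0.

Definition Dmx (R : pzRingType) (y : nat -> nat -> R) (m : nat) : 'M[R]_m.+1 :=
  \matrix_(k < m.+1, i < m.+1) y i k.

Definition generic (R : pzRingType) (y : nat -> nat -> R) : Prop :=
  forall m : nat, ncunitmx (Dmx y m) /\ qdet (Dmx y m) ord_max ord_max != 0.

(* Main.v *)
Require Import Defs.
From HB Require Import structures.
From mathcomp Require Import all_boot all_algebra.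
From Stdlib Require Import ClassicalEpsilon.
Set Implicit Arguments. Unset Strict Implicit.
Import GRing.Theory.
Local Open Scope ring_scope.

Lemma sum_delta_l (R : pzRingType) m j (F : nat -> R) : (j <= m)%N ->
  \sum_(k < m.+1) ((j == k :> nat)%:R * F k) = F j.
Proof.
move=> hj; have hj' : (j < m.+1)%N by rewrite ltnS.
rewrite (bigD1 (Ordinal hj')) //= eqxx mul1r big1 ?addr0 //.
move=> k hk; case: eqP => [Ejk|]; last by rewrite mul0r.
by move: hk; rewrite -val_eqE /= Ejk eqxx.
Qed.

Lemma sum_delta_r (R : pzRingType) m j (F : nat -> R) : (j <= m)%N ->
  \sum_(k < m.+1) (F k * (k == j :> nat)%:R) = F j.
Proof.
move=> hj; have hj' : (j < m.+1)%N by rewrite ltnS.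
rewrite (bigD1 (Ordinal hj')) //= eqxx mulr1 big1 ?addr0 //.
move=> k hk; case: eqP => [Ejk|]; last by rewrite mulr0.
by move: hk; rewrite -val_eqE /= Ejk eqxx.
Qed.

Definition Zf (R : pzRingType) (y : nat -> nat -> R) m i k : R :=
  ncinvmx (Dmx y m) (inord i) (inord k).

Lemma Dinv_spec (R : pzRingType) (y : nat -> nat -> R) m :
  ncunitmx (Dmx y m) -> mx_inverse (Dmx y m) (ncinvmx (Dmx y m)).
Proof. by move=> [B HB]; rewrite /ncinvmx; apply: epsilon_spec; exists B. Qed.

Lemma Inv1 (R : pzRingType) (y : nat -> nat -> R) m : ncunitmx (Dmx y m) ->
  forall i j, (i <= m)%N -> (j <= m)%N ->
  \sum_(k < m.+1) Zf y m i k * y j k = (i == j)%:R.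
Proof.
move=> H i j hi hj; have [_ HZD] := Dinv_spec H.
have hi' : (i < m.+1)%N by rewrite ltnS.
have hj' : (j < m.+1)%N by rewrite ltnS.
transitivity ((ncinvmx (Dmx y m) *m Dmx y m) (inord i) (inord j)).
  by rewrite mxE; apply: eq_bigr => k _; rewrite /Zf mxE inord_val inordK.
by rewrite HZD mxE -val_eqE /= !inordK.
Qed.

Lemma Inv2 (R : pzRingType) (y : nat -> nat -> R) m : ncunitmx (Dmx y m) ->
  forall i j, (i <= m)%N -> (j <= m)%N ->
  \sum_(k < m.+1) y k i * Zf y m k j = (i == j)%:R.
Proof.
move=> H i j hi hj; have [HDZ _] := Dinv_spec H.
have hi' : (i < m.+1)%N by rewrite ltnS.
have hj' : (j < m.+1)%N by rewrite ltnS.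
transitivity ((Dmx y m *m ncinvmx (Dmx y m)) (inord i) (inord j)).
  by rewrite mxE; apply: eq_bigr => k _; rewrite /Zf mxE inord_val inordK.
by rewrite HDZ mxE -val_eqE /= !inordK.
Qed.

Lemma qdetE (R : pzRingType) (y : nat -> nat -> R) m' :
  qdet (Dmx y m'.+1) ord_max ord_max =
  y m'.+1 m'.+1 - \sum_(k < m'.+1) (\sum_(j < m'.+1) y j m'.+1 * Zf y m' j k) * y m'.+1 k.
Proof.
have E : row' ord_max (col' ord_max (Dmx y m'.+1)) = Dmx y m'.
  by apply/matrixP => i j; rewrite !mxE !lift_max.
rewrite /qdet E !mxE; congr (_ - _); apply: eq_bigr => k _.
congr (_ * _); last by rewrite !mxE lift_max.
by rewrite mxE; apply: eq_bigr => j _; rewrite !mxE /Zf !inord_val lift_max.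
Qed.

Lemma qdet0 (R : pzRingType) (y : nat -> nat -> R) :
  qdet (Dmx y 0) ord_max ord_max = y 0%N 0%N.
Proof. by rewrite /qdet !mxE big_ord0 subr0. Qed.
Lemma schur (R : pzRingType) (y Z' Z : nat -> nat -> R) m' :
  (forall j l, (j <= m')%N -> (l <= m')%N -> \sum_(k < m'.+1) Z' j k * y l k = (j == l)%:R) ->
  (forall j l, (j <= m')%N -> (l <= m')%N -> \sum_(k < m'.+1) y k j * Z' k l = (j == l)%:R) ->
  (forall j l, (j <= m'.+1)%N -> (l <= m'.+1)%N -> \sum_(k < m'.+2) Z j k * y l k = (j == l)%:R) ->
  (forall j l, (j <= m'.+1)%N -> (l <= m'.+1)%N -> \sum_(k < m'.+2) y k j * Z k l = (j == l)%:R) ->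
  let L := y m'.+1 m'.+1 - \sum_(k < m'.+1) (\sum_(j < m'.+1) y j m'.+1 * Z' j k) * y m'.+1 k in
  [/\ L * Z m'.+1 m'.+1 = 1, Z m'.+1 m'.+1 * L = 1 &
     forall j l, (j <= m')%N -> (l <= m')%N -> Z j l = Z' j l + Z j m'.+1 * L * Z m'.+1 l].
Proof.
move=> H1' H2' H1 H2 L.
set m := m'.+1.
have hm : (m <= m)%N by [].
have hle : forall i, (i <= m')%N -> (i <= m)%N by move=> i hi; apply: leq_trans hi _.
have hneq : forall i, (i <= m')%N -> (i == m) = false by move=> i hi; rewrite ltn_eqF.
have hneq' : forall i, (i <= m')%N -> (m == i) = false by move=> i hi; rewrite eq_sym hneq.
have hx : forall i, (i <= m')%N ->
    \sum_(k < m'.+1) y k i * Z k m = - (y m i * Z m m).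
  move=> i hi; have := H2 i m (hle i hi) hm.
  rewrite big_ord_recr /= hneq // => /eqP; rewrite addr_eq0 => /eqP ->.
  done.
have xform : forall j, (j <= m')%N ->
    Z j m = - \sum_(i < m'.+1) Z' j i * (y m i * Z m m).
  move=> j hj; rewrite -(sum_delta_l (fun k => Z k m) hj).
  under eq_bigr => k _ do rewrite -(H1' j k hj (ltn_ord k)) mulr_suml.
  rewrite exchange_big -sumrN; apply: eq_bigr => i _.
  by rewrite -mulrN -(hx i (ltn_ord i)) mulr_sumr; apply: eq_bigr => k _; rewrite mulrA.
have hxi : forall l, (l <= m')%N ->
    \sum_(k < m'.+1) Z m k * y l k = - (Z m m * y l m).
  move=> l hl; have := H1 m l hm (hle l hl).
  rewrite big_ord_recr /= hneq' // => /eqP; rewrite addr_eq0 => /eqP ->.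
  done.
have xiform : forall l, (l <= m')%N ->
    Z m l = - \sum_(i < m'.+1) (Z m m * y i m) * Z' i l.
  move=> l hl; rewrite -(sum_delta_r (fun k => Z m k) hl).
  under eq_bigr => k _ do rewrite -(H2' k l (ltn_ord k) hl) mulr_sumr.
  rewrite exchange_big -sumrN; apply: eq_bigr => i _.
  by rewrite -mulNr -(hxi i (ltn_ord i)) mulr_suml; apply: eq_bigr => k _; rewrite mulrA.
have Lz : L * Z m m = 1.
  have := H2 m m hm hm; rewrite big_ord_recr /= eqxx mulr1n => <-.
  rewrite /L mulrBl addrC; congr (_ + _).
  under [RHS]eq_bigr => k _ do rewrite (xform k (ltn_ord k)) mulrN mulr_sumr.
  rewrite sumrN mulr_suml; congr (- _); rewrite exchange_big /=.
  apply: eq_bigr => k _; rewrite !mulr_suml; apply: eq_bigr => j _.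
  by rewrite !mulrA.
have zL : Z m m * L = 1.
  have := H1 m m hm hm; rewrite big_ord_recr /= eqxx mulr1n => <-.
  rewrite /L mulrBr addrC; congr (_ + _).
  under [RHS]eq_bigr => k _ do rewrite (xiform k (ltn_ord k)) mulNr mulr_suml.
  rewrite sumrN mulr_sumr; congr (- _).
  apply: eq_bigr => k _; rewrite mulr_suml mulr_sumr; apply: eq_bigr => j _.
  by rewrite !mulrA.
split=> // j l hj hl.
have hsub : forall i, (i <= m')%N ->
    \sum_(k < m'.+1) Z j k * y i k = (j == i)%:R - Z j m * y i m.
  move=> i hi; have := H1 j i (hle j hj) (hle i hi); rewrite big_ord_recr /= => <-.
  by rewrite addrK.
rewrite (xiform l hl) -(sum_delta_r (fun k => Z j k) hl).
under eq_bigr => k _ do rewrite -(H2' k l (ltn_ord k) hl) mulr_sumr.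
rewrite exchange_big /=.
have e1 : forall i : 'I_m'.+1, \sum_(k < m'.+1) Z j k * (y i k * Z' i l)
    = ((j == i)%:R - Z j m * y i m) * Z' i l.
  move=> i; rewrite -(hsub i (ltn_ord i)) mulr_suml; apply: eq_bigr => k _.
  by rewrite mulrA.
under eq_bigr => i _ do rewrite e1 mulrBl.
rewrite sumrB (sum_delta_l (fun i => Z' i l) hj); congr (_ + _).
rewrite mulrN mulr_sumr; congr (- _); apply: eq_bigr => i _.
by rewrite !mulrA -(mulrA _ L) Lz mulr1.
Qed.
Unset Implicit Arguments.
Theorem theorem7
  (K : unitRingType) (HK : skew_field K)
  (V : lmodType K) (V' : lmodType K^c)
  (pair : V -> V' -> K)
  (pairDl : forall (u1 u2 : V) (q : V'), pair (u1 + u2) q = pair u1 q + pair u2 q)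
  (pairDr : forall (u : V) (q1 q2 : V'), pair u (q1 + q2) = pair u q1 + pair u q2)
  (pairZ : forall (l : K) (u : V) (mu : K^c) (q : V'),
             pair (l *: u) (mu *: q) = l * pair u q * (mu : K))
  (v : nat -> V) (p : nat -> V')
  (Hgen : generic (fun i k => pair (v k) (p i)))
  (a c : nat -> nat -> K)
  (HAC : let q := fun m : nat => \sum_(i < m.+1) ((a m i : K) : K^c) *: p i in
         let w := fun m : nat => \sum_(k < m.+1) c m k *: v k in
         (forall m m' : nat, m <> m' -> pair (w m) (q m') = 0) /\
         (forall m : nat, pair (w m) (p m) = 1) /\
         (forall m : nat, pair (v m) (q m) = 1))
  (n : nat) (f : V) (g : V') :
  let y := fun i k : nat => pair (v k) (p i) in
  let DR := fun (m : nat) (f : V) => \sum_(i < m.+1) pair f (p i) * a m i in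
  let DL := fun (m : nat) (g : V') => \sum_(k < m.+1) c m k * pair (v k) g in
  let Rn := fun (f : V) (g : V') =>
    pair f g - \sum_(i < n.+1) \sum_(k < n.+1)
                 pair f (p i) * ncinvmx (Dmx y n) i k * pair (v k) g in
  pair f g = \sum_(m < n.+1) DR m f * qdet (Dmx y m) ord_max ord_max * DL m g + Rn f g
  /\ (forall i : nat, (i <= n)%N -> Rn f (p i) = 0)
  /\ (forall k : nat, (k <= n)%N -> Rn (v k) g = 0).
Proof.
move=> y DR DL Rn.
have ordle : forall n (i : 'I_n.+1), (i <= n)%N := fun n i => ltn_ord i.
have Hu : forall m, ncunitmx (Dmx y m) by move=> m; case: (Hgen m).
have I1 := fun m => Inv1 (Hu m).
have I2 := fun m => Inv2 (Hu m).
pose Lam m := qdet (Dmx y m) ord_max ord_max.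
have SL : forall m, Lam m * Zf y m m m = 1 /\ Zf y m m m * Lam m = 1.
  case=> [|m'].
    rewrite /Lam qdet0.
    have h1 := I1 0%N 0%N 0%N (leqnn 0) (leqnn 0).
    have h2 := I2 0%N 0%N 0%N (leqnn 0) (leqnn 0).
    rewrite big_ord1 /= ?eqxx ?mulr1n in h1; rewrite big_ord1 /= ?eqxx ?mulr1n in h2.
    by split.
  have [a1 a2 _] := schur (I1 m') (I2 m') (I1 m'.+1) (I2 m'.+1).
  by rewrite /Lam qdetE.
have UPD : forall m' j l, (j <= m')%N -> (l <= m')%N ->
   Zf y m'.+1 j l = Zf y m' j l + Zf y m'.+1 j m'.+1 * Lam m'.+1 * Zf y m'.+1 m'.+1 l.
  move=> m'; have [_ _ a3] := schur (I1 m') (I2 m') (I1 m'.+1) (I2 m'.+1).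
  by rewrite /Lam qdetE.
have pair0l : forall q, pair 0 q = 0.
  move=> q; have := pairDl 0 0 q; rewrite addr0 => /(congr1 (fun x => x - pair 0 q)).
  by rewrite subrr addrK => /esym.
have pair0r : forall u, pair u 0 = 0.
  move=> u; have := pairDr u 0 0; rewrite addr0 => /(congr1 (fun x => x - pair u 0)).
  by rewrite subrr addrK => /esym.
have pair_suml : forall (I : Type) (r : seq I) (P : pred I) (F : I -> V) q,
    pair (\sum_(i <- r | P i) F i) q = \sum_(i <- r | P i) pair (F i) q.
  by move=> I r P F q; apply: (big_morph (fun u => pair u q) (fun u1 u2 => pairDl u1 u2 q) (pair0l q)).
have pair_sumr : forall (I : Type) (r : seq I) (P : pred I) (F : I -> V') u,
    pair u (\sum_(i <- r | P i) F i) = \sum_(i <- r | P i) pair u (F i).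
  by move=> I r P F u; apply: (big_morph (fun q => pair u q) (fun q1 q2 => pairDr u q1 q2) (pair0r u)).
have pairZl : forall l u q, pair (l *: u) q = l * pair u q.
  by move=> l u q; have := pairZ l u 1 q; rewrite scale1r mulr1.
have pairZr : forall u (mu : K) q, pair u ((mu : K^c) *: q) = pair u q * mu.
  by move=> u mu q; have := pairZ 1 u mu q; rewrite scale1r mul1r.
pose q := fun m : nat => \sum_(i < m.+1) ((a m i : K) : K^c) *: p i.
pose w := fun m : nat => \sum_(k < m.+1) c m k *: v k.
have [Hw0 [Hwp Hvq]] : (forall m m' : nat, m <> m' -> pair (w m) (q m') = 0) /\
         (forall m : nat, pair (w m) (p m) = 1) /\
         (forall m : nat, pair (v m) (q m) = 1) := HAC.
have ev : forall k m', pair (v k) (q m') = \sum_(i < m'.+1) y i k * a m' i.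
  by move=> k m'; rewrite pair_sumr; apply: eq_bigr => i _; rewrite pairZr.
have ew : forall j i, pair (w j) (p i) = \sum_(k < j.+1) c j k * y i k.
  by move=> j i; rewrite pair_suml; apply: eq_bigr => k _; rewrite pairZl.
have ewq : forall j m', pair (w j) (q m') = \sum_(k < j.+1) c j k * pair (v k) (q m').
  by move=> j m'; rewrite pair_suml; apply: eq_bigr => k _; rewrite pairZl.
have ewq' : forall j m', pair (w j) (q m') = \sum_(i < m'.+1) pair (w j) (p i) * a m' i.
  by move=> j m'; rewrite pair_sumr; apply: eq_bigr => i _; rewrite pairZr.
have AC : forall m, (forall i, (i <= m)%N -> a m i = Zf y m i m) /\
                    (forall k, (k <= m)%N -> c m k = Zf y m m k).
  elim/ltn_ind=> m IH.
  have u0 : forall k, (k < m)%N -> pair (v k) (q m) = 0.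
    elim/ltn_ind=> k IHk hk.
    have nkm : k <> m by move=> E; rewrite E ltnn in hk.
    have := Hw0 k m nkm; rewrite ewq big_ord_recr /=.
    rewrite big1 ?add0r => [hck|k' _]; last first.
      by rewrite (IHk k' (ltn_ord k') (ltn_trans (ltn_ord k') hk)) mulr0.
    have [_ hc] := IH k hk; rewrite hc // in hck.
    have [L1 _] := SL k.
    by rewrite -[pair (v k) (q m)]mul1r -L1 -mulrA hck mulr0.
  have uval : forall k, (k <= m)%N -> \sum_(i < m.+1) y i k * a m i = (k == m)%:R.
    move=> k hk; rewrite -ev; move: hk; rewrite leq_eqVlt => /orP[/eqP->|hlt].
      by rewrite eqxx Hvq.
    by rewrite u0 // ltn_eqF.
  have hA : forall i, (i <= m)%N -> a m i = Zf y m i m.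
    move=> i hi; rewrite -(sum_delta_l (fun i' => a m i') hi).
    under eq_bigr => i' _ do rewrite -(I1 m i i' hi (ltn_ord i')) mulr_suml.
    rewrite exchange_big /=.
    transitivity (\sum_(k < m.+1) Zf y m i k * (k == m :> nat)%:R); last first.
      by rewrite (sum_delta_r (fun k => Zf y m i k)).
    apply: eq_bigr => k _; rewrite -(uval k (ltn_ord k)) mulr_sumr.
    by apply: eq_bigr => i' _; rewrite mulrA.
  have t0 : forall i, (i < m)%N -> pair (w m) (p i) = 0.
    elim/ltn_ind=> i IHi hi.
    have nmi : m <> i by move=> E; rewrite E ltnn in hi.
    have := Hw0 m i nmi; rewrite ewq' big_ord_recr /=.
    rewrite big1 ?add0r => [hta|i' _]; last first.
      by rewrite (IHi i' (ltn_ord i') (ltn_trans (ltn_ord i') hi)) mul0r.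
    have [ha _] := IH i hi; rewrite ha // in hta.
    have [_ L2] := SL i.
    by rewrite -[pair (w m) (p i)]mulr1 -L2 mulrA hta mul0r.
  have tval : forall i, (i <= m)%N -> \sum_(k < m.+1) c m k * y i k = (m == i)%:R.
    move=> i hi; rewrite -ew; move: hi; rewrite leq_eqVlt => /orP[/eqP->|hlt].
      by rewrite eqxx Hwp.
    by rewrite t0 // eq_sym ltn_eqF.
  split=> // k hk.
  rewrite -(sum_delta_r (fun k' => c m k') hk).
  under eq_bigr => k' _ do rewrite -(I2 m k' k (ltn_ord k') hk) mulr_sumr.
  rewrite exchange_big /=.
  transitivity (\sum_(i < m.+1) (m == i :> nat)%:R * Zf y m i k); last first.
    by rewrite (sum_delta_l (fun i => Zf y m i k)).
  apply: eq_bigr => i _; rewrite -(tval i (ltn_ord i)) mulr_suml.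
  by apply: eq_bigr => k' _; rewrite mulrA.
have DRE : forall m, DR m f = \sum_(i < m.+1) pair f (p i) * Zf y m i m.
  by move=> m; apply: eq_bigr => i _; rewrite (AC m).1 // ordle.
have DLE : forall m, DL m g = \sum_(k < m.+1) Zf y m m k * pair (v k) g.
  by move=> m; apply: eq_bigr => k _; rewrite (AC m).2 // ordle.
have DEC : forall n i k, (i <= n.+1)%N -> (k <= n.+1)%N ->
    Zf y n.+1 i k = (if (i <= n)%N && (k <= n)%N then Zf y n i k else 0)
                    + Zf y n.+1 i n.+1 * Lam n.+1 * Zf y n.+1 n.+1 k.
  move=> n' i k hi hk; case: (leqP i n') => hi'; case: (leqP k n') => hk' /=.
  - exact: UPD.
  - have -> : k = n'.+1 by apply/eqP; rewrite eqn_leq hk hk'.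
    by rewrite add0r -mulrA (SL n'.+1).1 mulr1.
  - have -> : i = n'.+1 by apply/eqP; rewrite eqn_leq hi hi'.
    by rewrite add0r (SL n'.+1).2 mul1r.
  - have -> : k = n'.+1 by apply/eqP; rewrite eqn_leq hk hk'.
    by rewrite add0r -mulrA (SL n'.+1).1 mulr1.
have BD : forall n, \sum_(i < n.+1) \sum_(k < n.+1) pair f (p i) * Zf y n i k * pair (v k) g
   = \sum_(m < n.+1) DR m f * Lam m * DL m g.
  elim=> [|n' IHn].
    rewrite !big_ord1 DRE DLE !big_ord1 /=.
    by rewrite !mulrA -(mulrA _ (Lam 0%N)) (SL 0%N).1 mulr1.
  rewrite [RHS]big_ord_recr /= -IHn.
  transitivity (\sum_(i < n'.+2) \sum_(k < n'.+2)
       (pair f (p i) * (if (i <= n')%N && (k <= n')%N then Zf y n' i k else 0) * pair (v k) g)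
     + \sum_(i < n'.+2) \sum_(k < n'.+2)
       (pair f (p i) * (Zf y n'.+1 i n'.+1 * Lam n'.+1 * Zf y n'.+1 n'.+1 k) * pair (v k) g)).
    rewrite -big_split; apply: eq_bigr => i _; rewrite -big_split; apply: eq_bigr => k _ /=.
    by rewrite DEC ?ordle // mulrDr mulrDl.
  congr (_ + _).
    rewrite big_ord_recr /= [X in _ + X]big1 ?addr0 => [|k _]; last by rewrite ltnn mulr0 mul0r.
    apply: eq_bigr => i _; rewrite big_ord_recr /= ltnn andbF mulr0 mul0r addr0.
    by apply: eq_bigr => k _; rewrite !ordle.
  rewrite DRE DLE mulr_suml mulr_suml; apply: eq_bigr => i _; rewrite mulr_sumr.
  by apply: eq_bigr => k _; rewrite !mulrA.
have ZE : forall (F : nat -> nat -> K),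
    \sum_(i < n.+1) \sum_(k < n.+1) F i k * ncinvmx (Dmx y n) i k
    = \sum_(i < n.+1) \sum_(k < n.+1) F i k * Zf y n i k.
  by move=> F; apply: eq_bigr => i _; apply: eq_bigr => k _; rewrite /Zf !inord_val.
split; [|split].
- rewrite /Rn.
  have -> : \sum_(i < n.+1) \sum_(k < n.+1) pair f (p i) * ncinvmx (Dmx y n) i k * pair (v k) g
      = \sum_(i < n.+1) \sum_(k < n.+1) pair f (p i) * Zf y n i k * pair (v k) g.
    by apply: eq_bigr => i _; apply: eq_bigr => k _; rewrite /Zf !inord_val.
  by rewrite BD addrC subrK.
- move=> i hi; rewrite /Rn.
  suff -> : \sum_(i0 < n.+1) \sum_(k < n.+1) pair f (p i0) * ncinvmx (Dmx y n) i0 k * pair (v k) (p i)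
      = pair f (p i) by rewrite subrr.
  rewrite -(sum_delta_r (fun i' => pair f (p i')) hi); apply: eq_bigr => i' _.
  rewrite -(I1 n i' i (ordle _ i') hi) mulr_sumr; apply: eq_bigr => k _.
  by rewrite /Zf !inord_val mulrA.
- move=> k hk; rewrite /Rn.
  suff -> : \sum_(i < n.+1) \sum_(k0 < n.+1) pair (v k) (p i) * ncinvmx (Dmx y n) i k0 * pair (v k0) g
      = pair (v k) g by rewrite subrr.
  rewrite exchange_big /= -(sum_delta_l (fun k' => pair (v k') g) hk); apply: eq_bigr => k' _.
  rewrite -(I2 n k k' hk (ordle _ k')) mulr_suml; apply: eq_bigr => i _.
  by rewrite /Zf !inord_val.
Qed.
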